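(* Let $c$ be an ellipse and $e$ a confocal ellipse exterior to it, with semiaxes $(a_c,b_c)$ and $(a_e,b_e)$ respectively, and $k_e=a_e^2-a_c^2>0$. Let $P_1\dots P_N$ be an $N$-periodic billiard in $e$ with caustic $c$ with $N\equiv0\pmod 2$, let $Q_i$ be the contact point of the side $P_iP_{i+1}$ with $c$, and put $r_i=\overline{Q_{i-1}P_i}$, $l_i=\overline{P_iQ_i}$ (indices mod $N$). Then for all $i$: \begin{itemize} \item if $N=4n$: $r_i\,r_{i+n}=l_i\,l_{i+n}=k_e$; \item if $N=4n+2$: $r_i\,l_{i+n}=l_i\,r_{i+n+1}=k_e$. \end{itemize}
   Context: Confocal: $a_e^2-a_c^2=b_e^2-b_c^2=k_e$. A billiard in $e$ with caustic $c$ is a sequence of points $P_1,P_2,\dots$ on $e$ such that each line $P_iP_{i+1}$ is tangent to $c$ and $P_{i-1}P_i$, $P_iP_{i+1}$ are the two tangents from $P_i$ to $c$; it is traversed counterclockwise and is $N$-periodic if $P_{i+N}=P_i$. *)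

(* Defs.v *)
From Stdlib Require Import Reals.
Open Scope R_scope.

Definition point := (R * R)%type.

Definition on_ellipse (a b : R) (P : point) : Prop :=
  (fst P) ^ 2 / a ^ 2 + (snd P) ^ 2 / b ^ 2 = 1.

Definition on_tangent_at (a b : R) (T P : point) : Prop :=
  fst T * fst P / a ^ 2 + snd T * snd P / b ^ 2 = 1.

Definition edist (P Q : point) : R :=
  sqrt ((fst P - fst Q) ^ 2 + (snd P - snd Q) ^ 2).

(* Cross product (determinant) of position vectors; > 0 means Q is reached from P
   turning counterclockwise around the common centre. *)
Definition det2 (P Q : point) : R := fst P * snd Q - snd P * fst Q.

(* Main.v *)
Require Import Defs.
From Stdlib Require Import Reals Arith Lra Lia Psatz ZArith.
Open Scope R_scope.

Lemma sc1 x : sin x ^ 2 + cos x ^ 2 = 1.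
Proof. pose proof (sin2_cos2 x). unfold Rsqr in H. lra. Qed.

Lemma cos_Zper x k : cos (x + 2 * IZR k * PI) = cos x.
Proof.
  destruct (Z_le_gt_dec 0 k) as [Hk|Hk].
  - destruct (Z_of_nat_complete k Hk) as [n ->]. rewrite <- INR_IZR_INZ. apply cos_period.
  - assert (Hk' : (0 <= - k)%Z) by lia.
    destruct (Z_of_nat_complete _ Hk') as [n Hn].
    assert (k = (- Z.of_nat n)%Z) by lia. subst k.
    rewrite opp_IZR, <- INR_IZR_INZ.
    rewrite <- (cos_period (x + 2 * - INR n * PI) n). f_equal. ring.
Qed.

Lemma sin_Zper x k : sin (x + 2 * IZR k * PI) = sin x.
Proof.
  destruct (Z_le_gt_dec 0 k) as [Hk|Hk].
  - destruct (Z_of_nat_complete k Hk) as [n ->]. rewrite <- INR_IZR_INZ. apply sin_period.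
  - assert (Hk' : (0 <= - k)%Z) by lia.
    destruct (Z_of_nat_complete _ Hk') as [n Hn].
    assert (k = (- Z.of_nat n)%Z) by lia. subst k.
    rewrite opp_IZR, <- INR_IZR_INZ.
    rewrite <- (sin_period (x + 2 * - INR n * PI) n). f_equal. ring.
Qed.

Lemma angle_eq_Z x y : cos x = cos y -> sin x = sin y ->
  exists k : Z, x = y + 2 * IZR k * PI.
Proof.
  intros Hc Hs.
  assert (H0 : sin (x - y) = 0) by (rewrite sin_minus, Hc, Hs; ring).
  assert (H1 : cos (x - y) = 1) by (rewrite cos_minus, Hc, Hs; pose proof (sc1 y); lra).
  destruct (sin_eq_0_0 _ H0) as [j Hj].
  destruct (Z.Even_or_Odd j) as [[k Hk]|[k Hk]]; subst j.
  - exists k. rewrite mult_IZR in Hj. lra.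
  - exfalso. rewrite Hj, plus_IZR, mult_IZR in H1.
    replace ((2 * IZR k + 1) * PI) with (PI + 2 * IZR k * PI) in H1 by ring.
    rewrite cos_Zper, cos_PI in H1. lra.
Qed.

Lemma angle_eq_small x y : cos x = cos y -> sin x = sin y ->
  - (2 * PI) < x - y < 2 * PI -> x = y.
Proof.
  intros Hc Hs Hb. destruct (angle_eq_Z x y Hc Hs) as [k Hk].
  pose proof PI_RGT_0.
  assert (Hk1 : IZR k < 1).
  { destruct (Rlt_or_le (IZR k) 1) as [?|Hge]; auto. exfalso. nra. }
  assert (Hk2 : -1 < IZR k).
  { destruct (Rlt_or_le (-1) (IZR k)) as [?|Hge]; auto. exfalso. nra. }
  apply lt_IZR in Hk1. replace (-1) with (IZR (-1)) in Hk2 by reflexivity.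
  apply lt_IZR in Hk2. assert (k = 0%Z) by lia. subst k. rewrite Hk. simpl. ring.
Qed.

Lemma cos_plus_atan x w :
  cos (x + atan w) = (cos x - w * sin x) / sqrt (1 + w * w).
Proof. rewrite cos_plus, cos_atan, sin_atan. unfold Rsqr. field.
  apply Rgt_not_eq, sqrt_lt_R0. nra. Qed.

Lemma sin_plus_atan x w :
  sin (x + atan w) = (sin x + w * cos x) / sqrt (1 + w * w).
Proof. rewrite sin_plus, cos_atan, sin_atan. unfold Rsqr. field.
  apply Rgt_not_eq, sqrt_lt_R0. nra. Qed.

Lemma cos_gt_small u d : 0 < d <= PI -> - d < u < d -> cos u > cos d.
Proof.
  intros Hd Hu. destruct (Rle_or_lt 0 u).
  - apply cos_decreasing_1; lra.
  - rewrite <- (cos_neg u). apply cos_decreasing_1; lra.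
Qed.

Lemma cos_lt_big u d : 0 < d < PI -> d < u < 2 * PI - d -> cos u < cos d.
Proof.
  intros Hd Hu. destruct (Rle_or_lt u PI).
  - apply cos_decreasing_1; lra.
  - replace (cos u) with (cos (2 * PI - u)).
    + apply cos_decreasing_1; lra.
    + rewrite cos_minus, cos_2PI, sin_2PI. ring.
Qed.

Definition F (al be s t : R) := al * cos s * cos t + be * sin s * sin t - 1.
Definition Dd (al be s : R) := al * cos s ^ 2 + be * sin s ^ 2.
Definition R2 (al be s : R) := al ^ 2 * cos s ^ 2 + be ^ 2 * sin s ^ 2.
Definition Rr al be s := sqrt (R2 al be s).
Definition wpsi al be s := (be - al) * sin s * cos s / Dd al be s.
Definition psi al be s := s + atan (wpsi al be s).
Definition del al be s := atan (sqrt (R2 al be s - 1)).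
Definition h al be s := psi al be s + del al be s.
Definition hm al be s := psi al be s - del al be s.

Lemma F_sym al be s t : F al be s t = F al be t s.
Proof. unfold F. ring. Qed.


Lemma Dd_pos al be s : 1 < al -> 1 < be -> 0 < Dd al be s.
Proof. intros. unfold Dd. pose proof (sc1 s). nra. Qed.

Lemma R2_gt1 al be s : 1 < al -> 1 < be -> 1 < R2 al be s.
Proof. intros. unfold R2. pose proof (sc1 s).
  assert (0 <= cos s ^ 2) by nra. assert (0 <= sin s ^2) by nra.
  assert (al ^ 2 > 1) by nra. assert (be ^ 2 > 1) by nra.
  destruct (Rle_or_lt (cos s ^2) 0); nra. Qed.

Lemma Rr_pos al be s : 1 < al -> 1 < be -> 0 < Rr al be s.
Proof. intros. unfold Rr. apply sqrt_lt_R0. pose proof (R2_gt1 al be s). lra. Qed.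

Lemma Rr_sq al be s : 1 < al -> 1 < be -> Rr al be s * Rr al be s = R2 al be s.
Proof. intros. unfold Rr. apply sqrt_sqrt. pose proof (R2_gt1 al be s). lra. Qed.

Lemma sqrt_wpsi al be s : 1 < al -> 1 < be ->
  sqrt (1 + wpsi al be s * wpsi al be s) = Rr al be s / Dd al be s.
Proof.
  intros. pose proof (Dd_pos al be s H H0). pose proof (Rr_pos al be s H H0).
  apply sqrt_lem_1.
  - nra.
  - apply Rlt_le, Rdiv_lt_0_compat; auto.
  - unfold Rdiv. rewrite (Rmult_comm (Rr al be s)).
    replace (/ Dd al be s * Rr al be s * (/ Dd al be s * Rr al be s))
      with ((Rr al be s * Rr al be s) / (Dd al be s * Dd al be s)) by (field; lra).
    rewrite Rr_sq by auto. unfold wpsi, R2. unfold Dd in *.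
    pose proof (sc1 s).
    assert (Hd : al * cos s ^ 2 + be * sin s ^ 2 <> 0) by lra.
    field_simplify_eq; [|exact Hd].
    replace (sin s ^ 2) with (1 - cos s ^ 2) by lra.
    replace (sin s ^ 4) with ((1 - cos s ^ 2)^2) by (rewrite <- (Rmult_1_r (sin s ^ 4)); replace (sin s ^4) with ((sin s ^2)^2) by ring; replace (sin s ^2) with (1 - cos s ^2) by lra; ring).
    ring.
Qed.

Lemma psi_cos al be s : 1 < al -> 1 < be ->
  Rr al be s * cos (psi al be s) = al * cos s.
Proof.
  intros. unfold psi. rewrite cos_plus_atan, sqrt_wpsi by auto.
  pose proof (Dd_pos al be s H H0). pose proof (Rr_pos al be s H H0).
  unfold wpsi. field_simplify; try lra. unfold Dd. pose proof (sc1 s).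
  replace (sin s ^ 2) with (1 - cos s ^ 2) by lra. ring.
Qed.

Lemma psi_sin al be s : 1 < al -> 1 < be ->
  Rr al be s * sin (psi al be s) = be * sin s.
Proof.
  intros. unfold psi. rewrite sin_plus_atan, sqrt_wpsi by auto.
  pose proof (Dd_pos al be s H H0). pose proof (Rr_pos al be s H H0).
  unfold wpsi. field_simplify; try lra. unfold Dd. pose proof (sc1 s).
  replace (cos s ^ 2) with (1 - sin s ^ 2) by lra. ring.
Qed.

Lemma F_cos al be s t : 1 < al -> 1 < be ->
  F al be s t = Rr al be s * cos (t - psi al be s) - 1.
Proof.
  intros. rewrite cos_minus.
  replace (Rr al be s * (cos t * cos (psi al be s) + sin t * sin (psi al be s)))
    with (cos t * (Rr al be s * cos (psi al be s)) + sin t * (Rr al be s * sin (psi al be s))) by ring.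
  rewrite psi_cos, psi_sin by auto. unfold F. ring.
Qed.

Lemma del_cos al be s : 1 < al -> 1 < be -> Rr al be s * cos (del al be s) = 1.
Proof.
  intros. unfold del. rewrite cos_atan. pose proof (R2_gt1 al be s H H0).
  unfold Rsqr. rewrite sqrt_sqrt by lra.
  replace (1 + (R2 al be s - 1)) with (R2 al be s) by ring. fold (Rr al be s).
  pose proof (Rr_pos al be s H H0). field. lra.
Qed.

Lemma del_bound al be s : 1 < al -> 1 < be -> 0 < del al be s < PI / 2.
Proof.
  intros. unfold del. split.
  - rewrite <- atan_0. apply atan_increasing. apply sqrt_lt_R0.
    pose proof (R2_gt1 al be s H H0). lra.
  - pose proof (atan_bound (sqrt (R2 al be s - 1))). lra.
Qed.

Lemma psi_bound al be s : - (PI / 2) < psi al be s - s < PI / 2.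
Proof. unfold psi. pose proof (atan_bound (wpsi al be s)). lra. Qed.

Lemma F_eq al be s t : 1 < al -> 1 < be ->
  F al be s t = Rr al be s * (cos (t - psi al be s) - cos (del al be s)).
Proof.
  intros. rewrite F_cos by auto. pose proof (del_cos al be s H H0). lra.
Qed.

Lemma F_pos al be s t : 1 < al -> 1 < be ->
  - del al be s < t - psi al be s < del al be s -> 0 < F al be s t.
Proof.
  intros. rewrite F_eq by auto. pose proof (del_bound al be s H H0).
  pose proof (Rr_pos al be s H H0). pose proof PI_RGT_0.
  assert (cos (t - psi al be s) > cos (del al be s)) by (apply cos_gt_small; lra).
  nra.
Qed.

Lemma F_neg al be s t : 1 < al -> 1 < be ->
  (del al be s < t - psi al be s < 2 * PI - del al be s \/
   del al be s - 2 * PI < t - psi al be s < - del al be s) -> F al be s t < 0.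
Proof.
  intros. rewrite F_eq by auto. pose proof (del_bound al be s H H0).
  pose proof (Rr_pos al be s H H0). pose proof PI_RGT_0.
  assert (cos (t - psi al be s) < cos (del al be s)).
  { destruct H1.
    - apply cos_lt_big; lra.
    - rewrite <- cos_neg. apply cos_lt_big; lra. }
  nra.
Qed.

Lemma F_h al be s : 1 < al -> 1 < be -> F al be s (h al be s) = 0.
Proof. intros. rewrite F_eq by auto. unfold h.
  replace (psi al be s + del al be s - psi al be s) with (del al be s) by ring. ring. Qed.

Lemma F_hm al be s : 1 < al -> 1 < be -> F al be s (hm al be s) = 0.
Proof. intros. rewrite F_eq by auto. unfold hm.
  replace (psi al be s - del al be s - psi al be s) with (- del al be s) by ring.
  rewrite cos_neg. ring. Qed.

Lemma s_near al be s : 1 < al -> 1 < be ->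
  - del al be s < s - psi al be s < del al be s.
Proof.
  intros. pose proof (psi_bound al be s). pose proof (del_bound al be s H H0).
  pose proof PI_RGT_0.
  assert (Fs : 0 < F al be s s).
  { unfold F. pose proof (sc1 s). assert (0 <= cos s ^ 2) by nra.
    assert (0 <= sin s ^ 2) by nra.
    replace (al * cos s * cos s + be * sin s * sin s) with (al * cos s ^2 + be * sin s ^2) by ring.
    destruct (Rle_or_lt (cos s ^2) 0); nra. }
  split.
  - destruct (Rtotal_order (- del al be s) (s - psi al be s)) as [?|[Heq|?]]; auto; exfalso.
    + rewrite F_eq in Fs by auto. rewrite <- Heq, cos_neg in Fs. lra.
    + assert (F al be s s < 0) by (apply F_neg; auto; right; lra). lra.
  - destruct (Rtotal_order (s - psi al be s) (del al be s)) as [?|[Heq|?]]; auto; exfalso.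
    + rewrite F_eq in Fs by auto. rewrite Heq in Fs. lra.
    + assert (F al be s s < 0) by (apply F_neg; auto; left; lra). lra.
Qed.

Lemma h_range al be s : 1 < al -> 1 < be -> s < h al be s < s + PI.
Proof. intros. pose proof (s_near al be s H H0). pose proof (del_bound al be s H H0).
  pose proof (psi_bound al be s). unfold h. lra. Qed.

Lemma hm_range al be s : 1 < al -> 1 < be -> s - PI < hm al be s < s.
Proof. intros. pose proof (s_near al be s H H0). pose proof (del_bound al be s H H0).
  pose proof (psi_bound al be s). unfold hm. lra. Qed.

Lemma h_unique al be s t : 1 < al -> 1 < be -> F al be s t = 0 ->
  s < t < s + PI -> t = h al be s.
Proof.
  intros. pose proof (s_near al be s H H0). pose proof (del_bound al be s H H0).
  pose proof PI_RGT_0. unfold h.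
  destruct (Rtotal_order (t - psi al be s) (del al be s)) as [?|[?|?]].
  - assert (0 < F al be s t) by (apply F_pos; auto; lra). lra.
  - lra.
  - assert (F al be s t < 0) by (apply F_neg; auto; left; lra). lra.
Qed.

Lemma hm_unique al be s t : 1 < al -> 1 < be -> F al be s t = 0 ->
  s - PI < t < s -> t = hm al be s.
Proof.
  intros. pose proof (s_near al be s H H0). pose proof (del_bound al be s H H0).
  pose proof PI_RGT_0. unfold hm.
  destruct (Rtotal_order (t - psi al be s) (- del al be s)) as [?|[?|?]].
  - assert (F al be s t < 0) by (apply F_neg; auto; right; lra). lra.
  - lra.
  - assert (0 < F al be s t) by (apply F_pos; auto; lra). lra.
Qed.

Lemma hm_h al be x : 1 < al -> 1 < be -> hm al be (h al be x) = x.
Proof.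
  intros. symmetry. apply hm_unique; auto.
  - rewrite F_sym. apply F_h; auto.
  - pose proof (h_range al be x H H0). lra.
Qed.

Lemma h_hm al be x : 1 < al -> 1 < be -> h al be (hm al be x) = x.
Proof.
  intros. symmetry. apply h_unique; auto.
  - rewrite F_sym. apply F_hm; auto.
  - pose proof (hm_range al be x H H0). lra.
Qed.

Lemma F_per al be s t k : F al be s (t + 2 * IZR k * PI) = F al be s t.
Proof. unfold F. rewrite cos_Zper, sin_Zper. reflexivity. Qed.

Lemma F_roots al be s t : 1 < al -> 1 < be -> F al be s t = 0 ->
  exists k : Z, t = h al be s + 2 * IZR k * PI \/ t = hm al be s + 2 * IZR k * PI.
Proof.
  intros. pose proof (s_near al be s H H0). pose proof (del_bound al be s H H0).
  pose proof PI_RGT_0.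
  set (z := (t - psi al be s + del al be s) / (2 * PI)).
  destruct (base_Int_part z) as [Hz1 Hz2].
  set (k := Int_part z) in *.
  assert (Hu1 : - del al be s <= t - 2 * IZR k * PI - psi al be s).
  { unfold z in Hz1. apply Rmult_le_compat_r with (r := 2 * PI) in Hz1; [|lra].
    unfold Rdiv in Hz1. rewrite Rmult_assoc, Rinv_l in Hz1 by lra. lra. }
  assert (Hu2 : t - 2 * IZR k * PI - psi al be s < 2 * PI - del al be s).
  { assert (z < IZR k + 1) by lra. unfold z in H5.
    apply Rmult_lt_compat_r with (r := 2 * PI) in H5; [|lra].
    unfold Rdiv in H5. rewrite Rmult_assoc, Rinv_l in H5 by lra. lra. }
  assert (HF : F al be s (t + 2 * IZR (- k) * PI) = 0) by (rewrite F_per; auto).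
  rewrite opp_IZR in HF.
  exists k. unfold h, hm.
  destruct (Rtotal_order (t - 2 * IZR k * PI - psi al be s) (- del al be s)) as [?|[?|?]].
  - lra.
  - right. lra.
  - destruct (Rtotal_order (t - 2 * IZR k * PI - psi al be s) (del al be s)) as [?|[?|?]].
    + assert (0 < F al be s (t + 2 * - IZR k * PI)) by (apply F_pos; auto; lra). lra.
    + left. lra.
    + assert (F al be s (t + 2 * - IZR k * PI) < 0) by (apply F_neg; auto; left; lra). lra.
Qed.

Lemma h_mono al be x y : 1 < al -> 1 < be -> x < y -> h al be x < h al be y.
Proof.
  intros Ha Hb Hxy.
  destruct (Rlt_or_le (h al be x) (h al be y)) as [?|Hle]; auto. exfalso.
  pose proof (h_range al be x Ha Hb). pose proof (h_range al be y Ha Hb).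
  set (X := h al be x) in *. set (Y := h al be y) in *.
  assert (HmX : hm al be X = x) by (apply hm_h; auto).
  destruct Hle as [Hlt|Heq].
  - assert (F al be y X < 0).
    { apply F_neg; auto. left. pose proof (s_near al be y Ha Hb).
      pose proof (del_bound al be y Ha Hb).
      assert (Y = psi al be y + del al be y) by reflexivity. lra. }
    assert (0 < F al be X y).
    { apply F_pos; auto. pose proof (s_near al be X Ha Hb).
      assert (hm al be X = psi al be X - del al be X) by reflexivity. lra. }
    rewrite F_sym in H1. lra.
  - assert (y = hm al be X).
    { apply hm_unique; auto. rewrite F_sym. rewrite <- Heq. apply F_h; auto. lra. }
    lra.
Qed.

Lemma wpsi_pi al be s : wpsi al be (s + PI) = wpsi al be s.
Proof. unfold wpsi, Dd. rewrite neg_sin, neg_cos. f_equal; ring. Qed.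

Lemma R2_pi al be s : R2 al be (s + PI) = R2 al be s.
Proof. unfold R2. rewrite neg_sin, neg_cos. ring. Qed.

Lemma h_pi al be s : h al be (s + PI) = h al be s + PI.
Proof. unfold h, psi, del. rewrite wpsi_pi, R2_pi. ring. Qed.

Lemma hm_pi al be s : hm al be (s + PI) = hm al be s + PI.
Proof. unfold hm, psi, del. rewrite wpsi_pi, R2_pi. ring. Qed.

Lemma h_hm_diff al be s : 1 < al -> 1 < be ->
  0 < h al be s - hm al be s < PI.
Proof. intros. pose proof (del_bound al be s H H0). unfold h, hm. lra. Qed.

Definition Ds ga x := sin x ^ 2 + ga * cos x ^ 2.
Definition wsig ga x := (1 - ga) * sin x * cos x / Ds ga x.
Definition sig ga x := x + PI / 2 + atan (wsig ga x).
Definition M2s ga x := sin x ^ 2 + ga ^ 2 * cos x ^ 2.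
Definition Ms ga x := sqrt (M2s ga x).

Lemma Ds_pos ga x : 0 < ga -> 0 < Ds ga x.
Proof. intros. unfold Ds. pose proof (sc1 x).
  assert (0 <= cos x ^ 2) by nra. assert (0 <= sin x ^2) by nra.
  destruct (Rle_or_lt (cos x ^2) 0); nra. Qed.

Lemma M2s_pos ga x : 0 < ga -> 0 < M2s ga x.
Proof. intros. unfold M2s. pose proof (sc1 x).
  assert (0 <= cos x ^ 2) by nra. assert (0 <= sin x ^2) by nra.
  assert (0 < ga ^ 2) by nra.
  destruct (Rle_or_lt (cos x ^2) 0); nra. Qed.

Lemma Ms_pos ga x : 0 < ga -> 0 < Ms ga x.
Proof. intros. apply sqrt_lt_R0, M2s_pos; auto. Qed.

Lemma Ms_sq ga x : 0 < ga -> Ms ga x * Ms ga x = M2s ga x.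
Proof. intros. apply sqrt_sqrt. pose proof (M2s_pos ga x H). lra. Qed.

Lemma sqrt_wsig ga x : 0 < ga ->
  sqrt (1 + wsig ga x * wsig ga x) = Ms ga x / Ds ga x.
Proof.
  intros. pose proof (Ds_pos ga x H). pose proof (Ms_pos ga x H).
  apply sqrt_lem_1.
  - nra.
  - apply Rlt_le, Rdiv_lt_0_compat; auto.
  - unfold Rdiv. rewrite (Rmult_comm (Ms ga x)).
    replace (/ Ds ga x * Ms ga x * (/ Ds ga x * Ms ga x))
      with ((Ms ga x * Ms ga x) / (Ds ga x * Ds ga x)) by (field; lra).
    rewrite Ms_sq by auto. unfold wsig, M2s. unfold Ds in *.
    pose proof (sc1 x).
    assert (Hd : sin x ^ 2 + ga * cos x ^ 2 <> 0) by lra.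
    field_simplify_eq; [|exact Hd].
    replace (sin x ^ 2) with (1 - cos x ^ 2) by lra.
    replace (sin x ^ 4) with ((sin x ^2)^2) by ring.
    replace (sin x ^ 2) with (1 - cos x ^ 2) by lra.
    ring.
Qed.

Lemma sig_cos ga x : 0 < ga -> cos (sig ga x) = - sin x / Ms ga x.
Proof.
  intros. unfold sig.
  replace (x + PI / 2 + atan (wsig ga x)) with ((x + atan (wsig ga x)) + PI / 2) by ring.
  rewrite cos_plus, cos_PI2, sin_PI2, sin_plus_atan, sqrt_wsig by auto.
  pose proof (Ds_pos ga x H). pose proof (Ms_pos ga x H).
  unfold wsig. field_simplify; try lra. unfold Ds. pose proof (sc1 x).
  replace (cos x ^ 2) with (1 - sin x ^ 2) by lra. field. all: lra.
Qed.

Lemma sig_sin ga x : 0 < ga -> sin (sig ga x) = ga * cos x / Ms ga x.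
Proof.
  intros. unfold sig.
  replace (x + PI / 2 + atan (wsig ga x)) with ((x + atan (wsig ga x)) + PI / 2) by ring.
  rewrite sin_plus, cos_PI2, sin_PI2, cos_plus_atan, sqrt_wsig by auto.
  pose proof (Ds_pos ga x H). pose proof (Ms_pos ga x H).
  unfold wsig. field_simplify; try lra. unfold Ds. pose proof (sc1 x).
  replace (sin x ^ 2) with (1 - cos x ^ 2) by lra. field. all: lra.
Qed.

Lemma sig_pi ga x : sig ga (x + PI) = sig ga x + PI.
Proof. unfold sig, wsig, Ds. rewrite neg_sin, neg_cos.
  replace ((1 - ga) * - sin x * - cos x) with ((1 - ga) * sin x * cos x) by ring.
  replace ((- sin x) ^ 2 + ga * (- cos x) ^ 2) with (sin x ^ 2 + ga * cos x ^ 2) by ring.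
  ring. Qed.

Lemma sig_range ga x : x < sig ga x < x + PI.
Proof. unfold sig. pose proof (atan_bound (wsig ga x)). lra. Qed.

Lemma sig_mono ga x y : 0 < ga -> x < y -> sig ga x < sig ga y.
Proof.
  intros Hg Hxy. pose proof PI_RGT_0.
  destruct (Rle_or_lt PI (y - x)).
  - unfold sig. pose proof (atan_bound (wsig ga x)). pose proof (atan_bound (wsig ga y)). lra.
  - assert (Hs : 0 < sin (sig ga y - sig ga x)).
    { rewrite sin_minus, !sig_sin, !sig_cos by auto.
      pose proof (Ms_pos ga x Hg). pose proof (Ms_pos ga y Hg).
      assert (Hsy : 0 < sin (y - x)) by (apply sin_gt_0; lra).
      rewrite sin_minus in Hsy.
      replace (ga * cos y / Ms ga y * (- sin x / Ms ga x) - - sin y / Ms ga y * (ga * cos x / Ms ga x))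
        with (ga * (sin y * cos x - cos y * sin x) / (Ms ga x * Ms ga y)) by (field; lra).
      apply Rdiv_lt_0_compat; nra. }
    destruct (Rlt_or_le (sig ga x) (sig ga y)) as [?|Hle]; auto. exfalso.
    pose proof (sig_range ga x). pose proof (sig_range ga y).
    assert (0 <= sin (sig ga x - sig ga y)) by (apply sin_ge_0; lra).
    replace (sig ga y - sig ga x) with (- (sig ga x - sig ga y)) in Hs by ring.
    rewrite sin_neg in Hs. lra.
Qed.

Lemma Ms_sig ga x : 0 < ga -> Ms ga (sig ga x) = ga / Ms ga x.
Proof.
  intros. pose proof (Ms_pos ga x H). unfold Ms at 1. apply sqrt_lem_1.
  - pose proof (M2s_pos ga (sig ga x) H). lra.
  - apply Rlt_le, Rdiv_lt_0_compat; auto.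
  - unfold M2s. rewrite sig_sin, sig_cos by auto.
    replace ((ga * cos x / Ms ga x) ^ 2 + ga ^ 2 * (- sin x / Ms ga x) ^ 2)
      with (ga ^ 2 * (sin x ^ 2 + cos x ^ 2) / (Ms ga x * Ms ga x)) by (field; lra).
    rewrite sc1. field. lra.
Qed.

Lemma sig_sig ga x : 0 < ga -> sig ga (sig ga x) = x + PI.
Proof.
  intros. pose proof (Ms_pos ga x H). pose proof PI_RGT_0.
  apply angle_eq_small.
  - rewrite sig_cos, Ms_sig, sig_sin, neg_cos by auto. field. lra.
  - rewrite sig_sin, Ms_sig, sig_cos, neg_sin by auto. field. lra.
  - pose proof (sig_range ga x). pose proof (sig_range ga (sig ga x)). lra.
Qed.

Lemma circ2 x y : sin x ^ 2 * cos y ^ 2 + cos x ^ 2 * sin y ^ 2 =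
  1 - (cos x * cos y) ^ 2 - (sin x * sin y) ^ 2.
Proof.
  assert (Hx : sin x ^ 2 = 1 - cos x ^ 2) by (pose proof (sc1 x); lra).
  assert (Hy : sin y ^ 2 = 1 - cos y ^ 2) by (pose proof (sc1 y); lra).
  replace ((sin x * sin y) ^ 2) with (sin x ^ 2 * sin y ^ 2) by ring.
  rewrite Hx, Hy. ring.
Qed.

Lemma alg1 al be ga u v : al * u + be * v = 1 -> ga ^ 2 * (be ^ 2 - 1) = al ^ 2 - 1 ->
  (al * v + be * ga ^ 2 * u) ^ 2 = v ^ 2 + ga ^ 2 * (1 - u ^ 2 - v ^ 2) + ga ^ 4 * u ^ 2.
Proof.
  intros hL hg.
  assert (E : (al * v + be * ga ^ 2 * u) ^ 2 - (v ^ 2 + ga ^ 2 * (1 - u ^ 2 - v ^ 2) + ga ^ 4 * u ^ 2)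
    = ga ^ 2 * ((al * u + be * v) ^ 2 - 1) + v ^ 2 * ((al ^ 2 - 1) - ga ^ 2 * (be ^ 2 - 1))
      + ga ^ 2 * u ^ 2 * (ga ^ 2 * (be ^ 2 - 1) - (al ^ 2 - 1))) by ring.
  rewrite hL, hg in E. ring_simplify in E. lra.
Qed.

Lemma alg_pos al be ga u v : 1 < al -> 1 < be -> 0 < ga ->
  al * u + be * v = 1 -> ga ^ 2 * (be ^ 2 - 1) = al ^ 2 - 1 ->
  -1 <= u - v <= 1 -> 0 < al * v + be * ga ^ 2 * u.
Proof.
  intros Ha Hb Hg hL hg Hd.
  assert (Hq : 0 < be ^ 2 - 1) by nra.
  assert (E : (be ^ 2 - 1) * (al * v + be * ga ^ 2 * u) =
     (al + 1) * (be - 1) / 2 * (1 - (u - v)) + (al - 1) * (be + 1) / 2 * (1 + (u - v))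
     + (al * be - 1) * (al * u + be * v - 1)).
  { replace ((be ^ 2 - 1) * (al * v + be * ga ^ 2 * u)) with
      ((be ^ 2 - 1) * al * v + be * (ga ^ 2 * (be ^ 2 - 1)) * u) by ring.
    rewrite hg. field. }
  rewrite hL in E.
  assert (0 < (be ^ 2 - 1) * (al * v + be * ga ^ 2 * u)).
  { rewrite E. assert (0 < (al + 1) * (be - 1)) by nra. assert (0 < (al - 1) * (be + 1)) by nra.
    destruct (Rle_or_lt 0 (u - v)); nra. }
  nra.
Qed.

Lemma sig_F al be ga x y : 1 < al -> 1 < be -> 0 < ga -> ga ^ 2 * (be ^ 2 - 1) = al ^ 2 - 1 ->
  F al be x y = 0 -> F al be (sig ga x) (sig ga y) = 0.
Proof.
  intros Ha Hb Hg hg HF.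
  assert (hL : al * (cos x * cos y) + be * (sin x * sin y) = 1) by (unfold F in HF; lra).
  set (Y := al * (sin x * sin y) + be * ga ^ 2 * (cos x * cos y)).
  assert (HY : 0 < Y).
  { apply (alg_pos al be ga (cos x * cos y) (sin x * sin y)); auto.
    replace (cos x * cos y - sin x * sin y) with (cos (x + y)) by (rewrite cos_plus; ring).
    apply COS_bound. }
  assert (HY2 : Y * Y = M2s ga x * M2s ga y).
  { unfold Y. replace ((al * (sin x * sin y) + be * ga ^ 2 * (cos x * cos y)) *
      (al * (sin x * sin y) + be * ga ^ 2 * (cos x * cos y))) with
      ((al * (sin x * sin y) + be * ga ^ 2 * (cos x * cos y)) ^ 2) by ring.
    rewrite (alg1 al be ga _ _ hL hg). rewrite <- circ2. unfold M2s. ring. }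
  assert (HM : Ms ga x * Ms ga y = Y).
  { unfold Ms. rewrite <- sqrt_mult.
    - rewrite <- HY2. apply sqrt_square. lra.
    - pose proof (M2s_pos ga x Hg). lra.
    - pose proof (M2s_pos ga y Hg). lra. }
  pose proof (Ms_pos ga x Hg). pose proof (Ms_pos ga y Hg).
  unfold F. rewrite !sig_cos, !sig_sin by auto.
  replace (al * (- sin x / Ms ga x) * (- sin y / Ms ga y) +
    be * (ga * cos x / Ms ga x) * (ga * cos y / Ms ga y) - 1) with
    (Y / (Ms ga x * Ms ga y) - 1) by (unfold Y; field; lra).
  rewrite HM. field. lra.
Qed.

Lemma h_sig al be ga x : 1 < al -> 1 < be -> 0 < ga -> ga ^ 2 * (be ^ 2 - 1) = al ^ 2 - 1 ->
  h al be (sig ga x) = sig ga (h al be x).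
Proof.
  intros. symmetry. apply h_unique; auto.
  - apply sig_F; auto. apply F_h; auto.
  - pose proof (h_range al be x H H0). split.
    + apply sig_mono; auto. lra.
    + rewrite <- sig_pi. apply sig_mono; auto. lra.
Qed.

Lemma Ms_prod al be ga x y : 1 < al -> 1 < be -> 0 < ga -> ga ^ 2 * (be ^ 2 - 1) = al ^ 2 - 1 ->
  F al be x y = 0 ->
  Ms ga x * Ms ga y = al * (sin x * sin y) + be * ga ^ 2 * (cos x * cos y).
Proof.
  intros Ha Hb Hg hg HF.
  assert (hL : al * (cos x * cos y) + be * (sin x * sin y) = 1) by (unfold F in HF; lra).
  set (Y := al * (sin x * sin y) + be * ga ^ 2 * (cos x * cos y)).
  assert (HY : 0 < Y).
  { apply (alg_pos al be ga (cos x * cos y) (sin x * sin y)); auto.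
    replace (cos x * cos y - sin x * sin y) with (cos (x + y)) by (rewrite cos_plus; ring).
    apply COS_bound. }
  assert (HY2 : Y * Y = M2s ga x * M2s ga y).
  { unfold Y. replace ((al * (sin x * sin y) + be * ga ^ 2 * (cos x * cos y)) *
      (al * (sin x * sin y) + be * ga ^ 2 * (cos x * cos y))) with
      ((al * (sin x * sin y) + be * ga ^ 2 * (cos x * cos y)) ^ 2) by ring.
    rewrite (alg1 al be ga _ _ hL hg). rewrite <- circ2. unfold M2s. ring. }
  unfold Ms. rewrite <- sqrt_mult.
  - rewrite <- HY2. apply sqrt_square. lra.
  - pose proof (M2s_pos ga x Hg). lra.
  - pose proof (M2s_pos ga y Hg). lra.
Qed.

Definition E (A B x : R) : point := (A * cos x, B * sin x).
Definition D2 A B a b x y := (A * cos x - a * cos y) ^ 2 + (B * sin x - b * sin y) ^ 2.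

Lemma edist_EC A B a b x y : edist (E A B x) (E a b y) = sqrt (D2 A B a b x y).
Proof. unfold edist, E, D2. simpl. reflexivity. Qed.

Lemma edist_sym P Q : edist P Q = edist Q P.
Proof. unfold edist. f_equal. ring. Qed.

Lemma D2_swap A B a b k x y : k = A ^ 2 - a ^ 2 -> k = B ^ 2 - b ^ 2 ->
  D2 A B a b x y = D2 A B a b y x.
Proof.
  intros. unfold D2.
  assert (E1 : (A * cos x - a * cos y) ^ 2 + (B * sin x - b * sin y) ^ 2 -
     ((A * cos y - a * cos x) ^ 2 + (B * sin y - b * sin x) ^ 2) =
     (A ^ 2 - a ^ 2) * (cos x ^ 2 - cos y ^ 2) + (B ^ 2 - b ^ 2) * (sin x ^ 2 - sin y ^ 2)) by ring.
  rewrite <- H, <- H0 in E1. pose proof (sc1 x). pose proof (sc1 y).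
  replace (k * (cos x ^ 2 - cos y ^ 2) + k * (sin x ^ 2 - sin y ^ 2)) with
    (k * ((sin x ^ 2 + cos x ^ 2) - (sin y ^ 2 + cos y ^ 2))) in E1 by ring.
  rewrite H1, H2 in E1. lra.
Qed.

Lemma lam_id A B a b x y : 0 < a -> 0 < b ->
  F (A / a) (B / b) x y = 0 ->
  D2 A B a b x y = ((B / b) * sin x * cos y - (A / a) * cos x * sin y) ^ 2 *
                   (a ^ 2 * sin y ^ 2 + b ^ 2 * cos y ^ 2).
Proof.
  intros ha hb HF. set (al := A / a) in *. set (be := B / b) in *.
  assert (HA : A = al * a) by (unfold al; field; lra).
  assert (HB : B = be * b) by (unfold be; field; lra).
  set (lam := be * sin x * cos y - al * cos x * sin y).
  pose proof (sc1 y) as Cy.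
  assert (e1 : al * cos x - cos y = - lam * sin y).
  { assert (al * cos x - cos y + lam * sin y = cos y * F al be x y + al * cos x * (1 - (sin y ^ 2 + cos y ^ 2)))
      by (unfold lam, F; ring).
    rewrite HF, Cy in H. lra. }
  assert (e2 : be * sin x - sin y = lam * cos y).
  { assert (be * sin x - sin y - lam * cos y = sin y * F al be x y + be * sin x * (1 - (sin y ^ 2 + cos y ^ 2)))
      by (unfold lam, F; ring).
    rewrite HF, Cy in H. lra. }
  unfold D2. rewrite HA, HB.
  replace (al * a * cos x - a * cos y) with (a * (al * cos x - cos y)) by ring.
  replace (be * b * sin x - b * sin y) with (b * (be * sin x - sin y)) by ring.
  rewrite e1, e2. ring.
Qed.

Lemma alg2 al be u v w : w = 1 - u ^ 2 - v ^ 2 -> al * u + be * v = 1 ->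
  al * be * w - (al ^ 2 + be ^ 2) * u * v = (al ^ 2 - 1) * be * u + (be ^ 2 - 1) * al * v.
Proof.
  intros -> hL.
  assert (E1 : al * be * (1 - u ^ 2 - v ^ 2) - (al ^ 2 + be ^ 2) * u * v -
     ((al ^ 2 - 1) * be * u + (be ^ 2 - 1) * al * v) =
     al * be * (1 - (al * u + be * v) ^ 2) - ((al ^ 2 - 1) * be * u + (be ^ 2 - 1) * al * v) * (1 - (al * u + be * v)))
   by ring.
  rewrite hL in E1. lra.
Qed.

Lemma key A B a b k x y : 0 < a -> 0 < b -> 0 < A -> 0 < B -> 0 < k ->
  k = A ^ 2 - a ^ 2 -> k = B ^ 2 - b ^ 2 ->
  F (A / a) (B / b) x y = 0 ->
  sqrt (D2 A B a b x y) * sqrt (D2 A B a b (sig (b / a) x) (sig (b / a) y)) = k.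
Proof.
  intros ha hb hA hB hk hka hkb HF.
  assert (Hal : 1 < A / a).
  { apply (Rmult_lt_reg_r a); auto. unfold Rdiv. rewrite Rmult_assoc, Rinv_l by lra.
    nra. }
  assert (Hbe : 1 < B / b).
  { apply (Rmult_lt_reg_r b); auto. unfold Rdiv. rewrite Rmult_assoc, Rinv_l by lra.
    nra. }
  assert (Hga : 0 < b / a) by (apply Rdiv_lt_0_compat; auto).
  assert (hg : (b / a) ^ 2 * ((B / b) ^ 2 - 1) = (A / a) ^ 2 - 1).
  { field_simplify; try lra. replace (B ^ 2) with (k + b ^ 2) by lra.
    replace (A ^ 2) with (k + a ^ 2) by lra. field. lra. }
  pose proof (sig_F _ _ _ x y Hal Hbe Hga hg HF) as HF'.
  pose proof (Ms_prod _ _ _ x y Hal Hbe Hga hg HF) as HM.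
  assert (Hprod : D2 A B a b x y * D2 A B a b (sig (b / a) x) (sig (b / a) y) = k * k).
  { rewrite (lam_id A B a b x y ha hb HF), (lam_id A B a b _ _ ha hb HF').
    rewrite !sig_sin, !sig_cos by auto.
    set (al := A / a) in *. set (be := B / b) in *. set (ga := b / a) in *.
    pose proof (Ms_pos ga x Hga) as Px. pose proof (Ms_pos ga y Hga) as Py.
    pose proof (Ms_sq ga y Hga) as Sy. unfold M2s in Sy.
    set (Mx := Ms ga x) in *. set (My := Ms ga y) in *.
    pose proof (sc1 x) as Cx. pose proof (sc1 y) as Cy.
    set (cx := cos x) in *. set (sx := sin x) in *. set (cy := cos y) in *. set (sy := sin y) in *.
    assert (Hag : a * ga = b) by (unfold ga; field; lra).
    assert (HT : a ^ 2 * sy ^ 2 + b ^ 2 * cy ^ 2 = a ^ 2 * (My * My)).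
    { rewrite Sy, <- Hag. ring. }
    assert (HT' : a ^ 2 * (ga * cy / My) ^ 2 + b ^ 2 * (- sy / My) ^ 2 = b ^ 2 / (My * My)).
    { rewrite <- Hag. field_simplify; try lra. replace (sy ^ 2) with (1 - cy ^ 2) by lra.
      field. lra. }
    assert (Hl' : be * (ga * cx / Mx) * (- sy / My) - al * (- sx / Mx) * (ga * cy / My)
       = ga * (al * sx * cy - be * cx * sy) / (Mx * My)) by (field; lra).
    rewrite HT, HT', Hl'.
    assert (Hlm : (be * sx * cy - al * cx * sy) * (al * sx * cy - be * cx * sy) =
                  (be ^ 2 - 1) * (Mx * My)).
    { rewrite HM.
      replace ((be * sx * cy - al * cx * sy) * (al * sx * cy - be * cx * sy)) with
        (al * be * (sx ^ 2 * cy ^ 2 + cx ^ 2 * sy ^ 2) - (al ^ 2 + be ^ 2) * (cx * cy) * (sx * sy)) by ring.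
      unfold sx, cx, sy, cy. rewrite circ2.
      rewrite (alg2 al be (cos x * cos y) (sin x * sin y) _ eq_refl).
      - rewrite <- hg. ring.
      - unfold F in HF. lra. }
    replace ((be * sx * cy - al * cx * sy) ^ 2 * (a ^ 2 * (My * My)) *
      ((ga * (al * sx * cy - be * cx * sy) / (Mx * My)) ^ 2 * (b ^ 2 / (My * My))))
      with (((be * sx * cy - al * cx * sy) * (al * sx * cy - be * cx * sy)) ^ 2 * ga ^ 2 * a ^ 2 * b ^ 2
             / ((Mx * My) ^ 2)) by (field; lra).
    rewrite Hlm. unfold be, ga. field_simplify; try lra.
    rewrite hkb. ring. }
  assert (P1 : 0 <= D2 A B a b x y) by (unfold D2; apply Rplus_le_le_0_compat; apply pow2_ge_0).
  assert (P2 : 0 <= D2 A B a b (sig (b / a) x) (sig (b / a) y)) by (unfold D2; apply Rplus_le_le_0_compat; apply pow2_ge_0).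
  rewrite <- (sqrt_mult _ _ P1 P2), Hprod. apply sqrt_square. lra.
Qed.

Lemma iter_shift (f : R -> R) n x : Nat.iter n f (f x) = f (Nat.iter n f x).
Proof. induction n; simpl; congruence. Qed.

Lemma iter_add (f : R -> R) n m x : Nat.iter (n + m) f x = Nat.iter n f (Nat.iter m f x).
Proof. induction n; simpl; congruence. Qed.

Lemma iter_mul (f : R -> R) k m x : Nat.iter k (Nat.iter m f) x = Nat.iter (k * m) f x.
Proof. induction k; simpl; auto. rewrite iter_add. congruence. Qed.

Lemma iter_comm (f g : R -> R) n y : (forall z, f (g z) = g (f z)) ->
  Nat.iter n f (g y) = g (Nat.iter n f y).
Proof. intros Hc. induction n; simpl; auto. rewrite IHn. apply Hc. Qed.

Lemma iter_mono (f : R -> R) n x y : (forall u v, u < v -> f u < f v) -> x < y ->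
  Nat.iter n f x < Nat.iter n f y.
Proof. intros Hm Hxy. induction n; simpl; auto. Qed.

Lemma iter_transl (f : R -> R) c n x : (forall z, f (z + c) = f z + c) ->
  Nat.iter n f (x + c) = Nat.iter n f x + c.
Proof. intros Hc. induction n; simpl; auto. rewrite IHn. apply Hc. Qed.

Lemma iter_gt (f : R -> R) n x : (forall z, z < f z) -> (0 < n)%nat -> x < Nat.iter n f x.
Proof.
  intros Hf Hn. induction n; [lia|]. simpl.
  destruct n; simpl in *. apply Hf.
  assert (x < Nat.iter (S n) f x) by (apply IHn; lia). simpl in H.
  specialize (Hf (f (Nat.iter n f x))). lra.
Qed.

Lemma compare_iter (f g : R -> R) x0 :
  (forall u v, u < v -> f u < f v) -> (forall u v, u < v -> g u < g v) ->
  (forall z, f (g z) = g (f z)) -> g x0 < f x0 ->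
  forall k, Nat.iter (S k) g x0 < Nat.iter (S k) f x0.
Proof.
  intros Hf Hg Hc H0 k. induction k; [exact H0|].
  assert (E1 : Nat.iter (S (S k)) f x0 = Nat.iter (S k) f (f x0)) by (rewrite iter_shift; reflexivity).
  assert (E2 : Nat.iter (S k) f (g x0) = g (Nat.iter (S k) f x0)) by (apply iter_comm; auto).
  assert (L1 : Nat.iter (S k) f (g x0) < Nat.iter (S k) f (f x0)) by (apply iter_mono; auto).
  assert (L2 : g (Nat.iter (S k) g x0) < g (Nat.iter (S k) f x0)) by (apply Hg; auto).
  change (Nat.iter (S (S k)) g x0) with (g (Nat.iter (S k) g x0)).
  rewrite E1. lra.
Qed.

Lemma eq_from_iter4 (f g : R -> R) x0 :
  (forall u v, u < v -> f u < f v) -> (forall u v, u < v -> g u < g v) ->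
  (forall z, f (g z) = g (f z)) -> Nat.iter 4 f x0 = Nat.iter 4 g x0 -> f x0 = g x0.
Proof.
  intros Hf Hg Hc H4.
  destruct (Rtotal_order (f x0) (g x0)) as [Hlt|[Heq|Hgt]]; auto; exfalso.
  - pose proof (compare_iter g f x0 Hg Hf (fun z => eq_sym (Hc z)) Hlt 3). lra.
  - pose proof (compare_iter f g x0 Hf Hg Hc Hgt 3). lra.
Qed.

Lemma ang_ex u v : u ^ 2 + v ^ 2 = 1 -> exists t, cos t = u /\ sin t = v.
Proof.
  intros H. assert (Hu : -1 <= u <= 1) by (split; nra).
  assert (Hs : sqrt (1 - u²) = Rabs v).
  { apply sqrt_lem_1. unfold Rsqr; nra. apply Rabs_pos.
    unfold Rsqr. rewrite <- Rabs_mult, Rabs_right by nra. nra. }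
  destruct (Rle_or_lt 0 v).
  - exists (acos u). rewrite cos_acos, sin_acos by auto. rewrite Hs, Rabs_right; auto; lra.
  - exists (- acos u). rewrite cos_neg, sin_neg, cos_acos, sin_acos by auto.
    rewrite Hs, Rabs_left; auto; lra.
Qed.

Lemma ellipse_E A B P : 0 < A -> 0 < B -> on_ellipse A B P -> exists t, P = E A B t.
Proof.
  intros hA hB H. destruct P as [x y]. unfold on_ellipse in H. simpl in H.
  destruct (ang_ex (x / A) (y / B)) as [t [Ht1 Ht2]].
  { replace ((x / A) ^ 2 + (y / B) ^ 2) with (x ^ 2 / A ^ 2 + y ^ 2 / B ^ 2) by (field; lra). auto. }
  exists t. unfold E. rewrite Ht1, Ht2. f_equal; field; lra.
Qed.

Lemma tan_F A B a b x t : 0 < a -> 0 < b ->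
  on_tangent_at a b (E a b t) (E A B x) -> F (A / a) (B / b) x t = 0.
Proof. intros ha hb H. unfold on_tangent_at, E in H. simpl in H. unfold F.
  rewrite <- H. field. lra. Qed.

Lemma det2_E A B x y : det2 (E A B x) (E A B y) = A * B * sin (y - x).
Proof. unfold det2, E. simpl. rewrite sin_minus. ring. Qed.

Lemma E_Z A B x k : E A B (x + 2 * IZR k * PI) = E A B x.
Proof. unfold E. rewrite cos_Zper, sin_Zper. reflexivity. Qed.

Lemma E_nat A B x q : E A B (x + 2 * INR q * PI) = E A B x.
Proof. unfold E. rewrite cos_period, sin_period. reflexivity. Qed.

Lemma D2_shift A B a b x y q : D2 A B a b (x + INR q * PI) (y + INR q * PI) = D2 A B a b x y.
Proof.
  induction q.
  - simpl. rewrite !Rmult_0_l, !Rplus_0_r. reflexivity.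
  - rewrite S_INR. replace (x + (INR q + 1) * PI) with ((x + INR q * PI) + PI) by ring.
    replace (y + (INR q + 1) * PI) with ((y + INR q * PI) + PI) by ring.
    rewrite <- IHq. unfold D2. rewrite !neg_cos, !neg_sin. ring.
Qed.

Lemma h_transl al be q z : h al be (z + INR q * PI) = h al be z + INR q * PI.
Proof.
  induction q.
  - simpl. rewrite !Rmult_0_l, !Rplus_0_r. reflexivity.
  - rewrite S_INR. replace (z + (INR q + 1) * PI) with ((z + INR q * PI) + PI) by ring.
    rewrite h_pi, IHq. ring.
Qed.

Lemma sig_transl ga q z : sig ga (z + INR q * PI) = sig ga z + INR q * PI.
Proof.
  induction q.
  - simpl. rewrite !Rmult_0_l, !Rplus_0_r. reflexivity.
  - rewrite S_INR. replace (z + (INR q + 1) * PI) with ((z + INR q * PI) + PI) by ring.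
    rewrite sig_pi, IHq. ring.
Qed.

Lemma iter_sig_even ga q x : 0 < ga -> Nat.iter (2 * q) (sig ga) x = x + INR q * PI.
Proof.
  intros Hg. induction q.
  - simpl. ring.
  - replace (2 * S q)%nat with (S (S (2 * q))) by lia.
    change (Nat.iter (S (S (2 * q))) (sig ga) x) with (sig ga (sig ga (Nat.iter (2 * q) (sig ga) x))).
    rewrite IHq. rewrite sig_sig by auto. rewrite S_INR. ring.
Qed.

Lemma E_inj A B x y : 0 < A -> 0 < B -> E A B x = E A B y -> cos x = cos y /\ sin x = sin y.
Proof.
  intros hA hB H. unfold E in H. injection H as H1 H2. split.
  - apply (Rmult_eq_reg_l A); lra.
  - apply (Rmult_eq_reg_l B); lra.
Qed.

Theorem theorem5
  (a_c b_c a_e b_e k_e : R)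
  (hac : 0 < a_c) (hbc : 0 < b_c) (hae : 0 < a_e) (hbe : 0 < b_e)
  (hkea : k_e = a_e ^ 2 - a_c ^ 2) (hkeb : k_e = b_e ^ 2 - b_c ^ 2)
  (hke : 0 < k_e)
  (N : nat) (P Q : nat -> point)
  (hN : (0 < N)%nat)
  (hper : forall i, P (i + N)%nat = P i)
  (hmin : forall m, (0 < m < N)%nat -> exists i, P (i + m)%nat <> P i)
  (hPe : forall i, on_ellipse a_e b_e (P i))
  (hQc : forall i, on_ellipse a_c b_c (Q i))
  (htan1 : forall i, on_tangent_at a_c b_c (Q i) (P i))
  (htan2 : forall i, on_tangent_at a_c b_c (Q i) (P (S i)))
  (htwo : forall i, Q i <> Q (S i))
  (hccw : forall i, 0 < det2 (P i) (P (S i)))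
  (heven : Nat.Even N) :
  let r := fun i => edist (Q (Nat.pred i)) (P i) in
  let l := fun i => edist (P i) (Q i) in
  (forall n, N = (4 * n)%nat ->
     forall i, (1 <= i)%nat ->
       r i * r (i + n)%nat = k_e /\ l i * l (i + n)%nat = k_e) /\
  (forall n, N = (4 * n + 2)%nat ->
     forall i, (1 <= i)%nat ->
       r i * l (i + n)%nat = k_e /\ l i * r (i + n + 1)%nat = k_e).
Proof.
  intros r l.
  set (al := a_e / a_c). set (be := b_e / b_c). set (ga := b_c / a_c).
  assert (Hal : 1 < al).
  { unfold al. apply (Rmult_lt_reg_r a_c); auto. unfold Rdiv. rewrite Rmult_assoc, Rinv_l by lra. nra. }
  assert (Hbe : 1 < be).
  { unfold be. apply (Rmult_lt_reg_r b_c); auto. unfold Rdiv. rewrite Rmult_assoc, Rinv_l by lra. nra. }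
  assert (Hga : 0 < ga) by (apply Rdiv_lt_0_compat; auto).
  assert (hg : ga ^ 2 * (be ^ 2 - 1) = al ^ 2 - 1).
  { unfold ga, be, al. field_simplify; try lra. replace (b_e ^ 2) with (k_e + b_c ^ 2) by lra.
    replace (a_e ^ 2) with (k_e + a_c ^ 2) by lra. field. lra. }
  pose proof PI_RGT_0 as HPI.
  assert (Hstep : forall i th, P i = E a_e b_e th ->
            Q i = E a_c b_c (h al be th) /\ P (S i) = E a_e b_e (h al be (h al be th))).
  { intros i th HPi.
    destruct (ellipse_E _ _ _ hac hbc (hQc i)) as [t Ht].
    assert (F1 : F al be th t = 0) by (apply tan_F; auto; rewrite <- Ht, <- HPi; apply htan1).
    destruct (ellipse_E _ _ _ hae hbe (hPe (S i))) as [th' Hth'].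
    assert (Hne : P (S i) <> P i).
    { intro Heq. pose proof (hccw i) as Hc. rewrite Heq in Hc. unfold det2 in Hc. lra. }
    assert (Hcase : forall t0, Q i = E a_c b_c t0 -> F al be th' t0 = 0 ->
              P (S i) = E a_e b_e (h al be t0) \/ P (S i) = E a_e b_e (hm al be t0)).
    { intros t0 Ht0 Hf. rewrite F_sym in Hf.
      destruct (F_roots _ _ _ _ Hal Hbe Hf) as [k [Hk|Hk]]; [left|right];
        rewrite Hth', Hk, E_Z; reflexivity. }
    destruct (F_roots _ _ _ _ Hal Hbe F1) as [k [Hk|Hk]].
    - assert (HQ : Q i = E a_c b_c (h al be th)) by (rewrite Ht, Hk, E_Z; reflexivity).
      split; auto.
      assert (F2 : F al be th' (h al be th) = 0) by (apply tan_F; auto; rewrite <- HQ, <- Hth'; apply htan2).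
      destruct (Hcase _ HQ F2) as [?|Hbad]; auto.
      rewrite hm_h in Hbad by auto. rewrite <- HPi in Hbad. contradiction.
    - assert (HQ : Q i = E a_c b_c (hm al be th)) by (rewrite Ht, Hk, E_Z; reflexivity).
      exfalso.
      assert (F2 : F al be th' (hm al be th) = 0) by (apply tan_F; auto; rewrite <- HQ, <- Hth'; apply htan2).
      destruct (Hcase _ HQ F2) as [Hbad|Hbad].
      + rewrite h_hm in Hbad by auto. rewrite <- HPi in Hbad. contradiction.
      + pose proof (hccw i) as Hc. rewrite HPi, Hbad, det2_E in Hc.
        set (t0 := hm al be th) in *.
        assert (th = h al be t0) by (unfold t0; rewrite h_hm; auto).
        pose proof (h_hm_diff al be t0 Hal Hbe).
        assert (0 < sin (h al be t0 - hm al be t0)) by (apply sin_gt_0; lra).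
        rewrite H in Hc. replace (hm al be t0 - h al be t0) with (- (h al be t0 - hm al be t0)) in Hc by ring.
        rewrite sin_neg in Hc.
        assert (0 < a_e * b_e * sin (h al be t0 - hm al be t0)) by
          (apply Rmult_lt_0_compat; [apply Rmult_lt_0_compat|]; auto).
        lra. }
  destruct (ellipse_E _ _ _ hae hbe (hPe 0%nat)) as [phi0 Hphi0].
  set (phi := fun j => Nat.iter j (h al be) phi0).
  assert (Hphi_S : forall j, phi (S j) = h al be (phi j)) by reflexivity.
  assert (HP : forall i, P i = E a_e b_e (phi (2 * i)%nat)).
  { induction i.
    - simpl. exact Hphi0.
    - destruct (Hstep _ _ IHi) as [_ H2]. rewrite H2.
      replace (2 * S i)%nat with (S (S (2 * i))) by lia. rewrite !Hphi_S. reflexivity. }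
  assert (HQ : forall i, Q i = E a_c b_c (phi (2 * i + 1)%nat)).
  { intro i. destruct (Hstep _ _ (HP i)) as [H1 _]. rewrite H1.
    replace (2 * i + 1)%nat with (S (2 * i)) by lia. rewrite Hphi_S. reflexivity. }
  assert (Hhgt : forall z, z < h al be z) by (intro z; apply (h_range al be z Hal Hbe)).
  assert (Hrho : exists rho : nat, phi (2 * N)%nat = phi0 + 2 * INR rho * PI).
  { pose proof (hper 0%nat) as H0. simpl in H0. rewrite !HP in H0.
    destruct (E_inj _ _ _ _ hae hbe H0) as [Hc Hs].
    destruct (angle_eq_Z _ _ Hc Hs) as [k Hk].
    assert (Hlt : phi0 < phi (2 * N)%nat) by (apply iter_gt; auto; lia).
    change (phi (2 * 0)%nat) with phi0 in Hk.
    assert (0 < IZR k).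
    { destruct (Rlt_or_le 0 (IZR k)); auto. exfalso. nra. }
    apply lt_IZR in H. destruct (Z_of_nat_complete k) as [rho Hr]; [lia|].
    exists rho. rewrite Hk, Hr, <- INR_IZR_INZ. reflexivity. }
  destruct Hrho as [rho Hrho].
  assert (Hhm : forall u v, u < v -> h al be u < h al be v) by (intros; apply h_mono; auto).
  assert (Hsm : forall u v, u < v -> sig ga u < sig ga v) by (intros; apply sig_mono; auto).
  assert (Hcomm : forall z, h al be (sig ga z) = sig ga (h al be z)) by (intros; apply h_sig; auto).
  assert (Hcore : forall m, N = (2 * m)%nat ->
            exists q : nat, forall j, phi (j + m)%nat = sig ga (phi j) + INR q * PI).
  { intros m Hm.
    assert (Hit : forall j, Nat.iter m (h al be) (phi j) = Nat.iter rho (sig ga) (phi j)).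
    { intro j. apply eq_from_iter4.
      - intros; apply iter_mono; auto.
      - intros; apply iter_mono; auto.
      - intro z. apply iter_comm. intro w. symmetry. apply iter_comm. intro v. symmetry. apply Hcomm.
      - rewrite !iter_mul.
        replace (4 * rho)%nat with (2 * (2 * rho))%nat by lia.
        rewrite iter_sig_even by auto.
        unfold phi. rewrite <- iter_add. rewrite Nat.add_comm, iter_add.
        replace (4 * m)%nat with (2 * N)%nat by lia.
        change (Nat.iter (2 * N) (h al be) phi0) with (phi (2 * N)%nat). rewrite Hrho.
        replace (2 * INR rho * PI) with (INR (2 * rho) * PI) by (rewrite mult_INR; simpl; ring).
        apply iter_transl. intro z. apply h_transl. }
    assert (Hjm : forall j, phi (j + m)%nat = Nat.iter rho (sig ga) (phi j)).
    { intro j. rewrite <- Hit. unfold phi. rewrite Nat.add_comm, iter_add. reflexivity. }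
    destruct (Nat.Even_or_Odd rho) as [[q Hq]|[q Hq]].
    - exfalso. subst rho.
      assert (Hm0 : (0 < m < N)%nat) by lia.
      destruct (hmin m Hm0) as [i Hi]. apply Hi.
      rewrite !HP. replace (2 * (i + m))%nat with ((2 * i + m) + m)%nat by lia.
      rewrite !Hjm, !iter_sig_even by auto.
      replace (phi (2 * i)%nat + INR q * PI + INR q * PI) with (phi (2 * i)%nat + 2 * INR q * PI) by ring.
      apply E_nat.
    - exists q. intro j. rewrite Hjm, Hq. rewrite Nat.add_1_r.
      change (Nat.iter (S (2 * q)) (sig ga) (phi j)) with (sig ga (Nat.iter (2 * q) (sig ga) (phi j))).
      rewrite <- iter_shift, iter_sig_even by auto. reflexivity. }
  assert (Hkey : forall x y q, F al be x y = 0 ->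
     sqrt (D2 a_e b_e a_c b_c x y) *
     sqrt (D2 a_e b_e a_c b_c (sig ga x + INR q * PI) (sig ga y + INR q * PI)) = k_e).
  { intros x y q Hf. rewrite D2_shift. apply key; auto. }
  assert (Hswap : forall x y, D2 a_e b_e a_c b_c x y = D2 a_e b_e a_c b_c y x).
  { intros. apply (D2_swap _ _ _ _ k_e); auto. }
  assert (Hf1 : forall j, F al be (phi j) (phi (S j)) = 0) by (intro j; rewrite Hphi_S; apply F_h; auto).
  assert (Hf2 : forall j, F al be (phi (S j)) (phi j) = 0) by (intro j; rewrite F_sym; apply Hf1).
  assert (Hr : forall i, r (S i) = sqrt (D2 a_e b_e a_c b_c (phi (2 * S i)%nat) (phi (2 * i + 1)%nat))).
  { intro i. unfold r. replace (Nat.pred (S i)) with i by reflexivity.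
    rewrite HP, HQ, edist_sym, edist_EC. reflexivity. }
  assert (Hl : forall i, l i = sqrt (D2 a_e b_e a_c b_c (phi (2 * i)%nat) (phi (2 * i + 1)%nat))).
  { intro i. unfold l. rewrite HP, HQ, edist_EC. reflexivity. }
  split.
  - intros n HN i Hi. destruct (Hcore (2 * n)%nat ltac:(lia)) as [q Hq].
    destruct i as [|i']; [lia|].
    replace (S i' + n)%nat with (S (i' + n)) by lia.
    rewrite !Hr, !Hl.
    replace (2 * S (i' + n) + 1)%nat with ((2 * S i' + 1) + 2 * n)%nat by lia.
    replace (2 * (i' + n) + 1)%nat with ((2 * i' + 1) + 2 * n)%nat by lia.
    replace (2 * S (i' + n))%nat with (2 * S i' + 2 * n)%nat by lia.
    rewrite !Hq. split.
    + apply Hkey. replace (2 * S i')%nat with (S (2 * i' + 1)) by lia. apply Hf2.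
    + apply Hkey. rewrite Nat.add_1_r. apply Hf1.
  - intros n HN i Hi. destruct (Hcore (2 * n + 1)%nat ltac:(lia)) as [q Hq].
    destruct i as [|i']; [lia|].
    replace (S i' + n + 1)%nat with (S (S i' + n)) by lia.
    rewrite !Hr, !Hl.
    replace (2 * (S i' + n) + 1)%nat with ((2 * S i') + (2 * n + 1))%nat by lia.
    replace (2 * (S i' + n))%nat with ((2 * i' + 1) + (2 * n + 1))%nat by lia.
    replace (2 * S (S i' + n))%nat with ((2 * S i' + 1) + (2 * n + 1))%nat by lia.
    rewrite !Hq. split.
    + rewrite (Hswap (sig ga _ + _)). apply Hkey.
      replace (2 * S i')%nat with (S (2 * i' + 1)) by lia. apply Hf2.
    + rewrite (Hswap (sig ga _ + _)). apply Hkey. rewrite Nat.add_1_r. apply Hf1.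
Qed.
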